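(* Define $\sigma:\mathbb N\to\mathbb N$ by $$\sigma(n)=\begin{cases}\lfloor(\varphi+1) n-2\rfloor, & n\in R_{1,0},\\ \lfloor\varphi n+2\rfloor, & n\in R_{3,1},\\ \lfloor(\varphi-1) n+2\rfloor, & n\in R_{2,2},\\ \lfloor(\varphi-1) n\rfloor, & n\in R_{2,0}.\end{cases}$$ Then $\sigma$ is an $R_{i,j}$-permutation of $\mathbb N$ of order $6$ (first values $2,3,1,8,11,5,16,4,7,24,\dots$), and its powers are the $R_{i,j}$-permutations $$\sigma^2(n)=\begin{cases}\lfloor\varphi n+2\rfloor, & n\in R_{2,2},\\ \lfloor\varphi n-2\rfloor, & n\in R_{1,0},\\ n, & n\in R_{4,0}\cup R_{3,1},\\ \lfloor(2-\varphi)n+1\rfloor, & n\in R_{3,2},\end{cases}\qquad \sigma^3(n)=\begin{cases}\lfloor\varphi n+2\rfloor, & n\in R_{3,1},\\ \lfloor(\varphi-1)n\rfloor, & n\in R_{4,0},\\ n, & n\in R_{3,2}\cup R_{2,2}\cup R_{1,0},\end{cases}$$ $$\sigma^4(n)=\begin{cases}\lfloor(\varphi+1)n-2\rfloor, & n\in R_{1,0},\\ \lfloor(\varphi-1)n+2\rfloor, & n\in R_{2,2},\\ \lfloor(\varphi-1)n\rfloor, & n\in R_{3,2},\\ n, & n\in R_{4,0}\cup R_{3,1},\end{cases}\qquad \sigma^5(n)=\sigma^{-1}(n)=\begin{cases}\lfloor\varphi n+2\rfloor, & n\in R_{1,1},\\ \lfloor\varphi n-2\rfloor, & n\in R_{1,0},\\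 \lfloor(\varphi-1)n\rfloor, & n\in R_{4,0},\\ \lfloor(2-\varphi)n+1\rfloor, & n\in R_{3,2}.\end{cases}$$
   Context: $\mathbb N=\{1,2,\dots\}$, $\varphi=\frac{1+\sqrt5}{2}$, $F$ the Fibonacci numbers ($F(0)=0,F(1)=F(2)=1$). For $i\in\mathbb Z^{\ge0},j\in\mathbb Z$, $R_{i,j}$ is the range of $n\mapsto F(i+1)\lfloor n\varphi\rfloor+F(i)n-j$, $n\in\mathbb N$. An $R_{i,j}$-permutation is a permutation $\pi$ of $\mathbb N$ defined piecewise on a finite partition of $\mathbb N$ into sets $R_{i,j}$, with $\pi(n)=\lfloor(a\varphi+b)n+c\rfloor$ on each piece for integers $a,b,c$ depending on the piece. Powers denote iterated composition. *)

(* Defs.v *)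
From Stdlib Require Import Reals ZArith List ClassicalEpsilon.
Open Scope R_scope.

Definition phi : R := (1 + sqrt 5) / 2.

(* floor as an integer: up x is the unique integer with x < up x <= x + 1 *)
Definition fl (x : R) : Z := (up x - 1)%Z.

Fixpoint fib (n : nat) : Z :=
  match n with
  | O => 0%Z
  | S O => 1%Z
  | S ((S m) as p) => (fib p + fib m)%Z
  end.

Definition inR (i : nat) (j : Z) (m : Z) : Prop :=
  exists n : Z, (1 <= n)%Z /\
    m = (fib (S i) * fl (IZR n * phi) + fib i * n - j)%Z.

(* a piece: the set R_{i,j} on which pi(n) = floor((a phi + b) n + c) *)
Record piece := Piece { p_i : nat; p_j : Z; p_a : Z; p_b : Z; p_c : Z }.

Definition piece_val (p : piece) (n : Z) : Z :=
  fl ((IZR (p_a p) * phi + IZR (p_b p)) * IZR n + IZR (p_c p)).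

Definition piece_set (p : piece) (m : Z) : Prop := inR (p_i p) (p_j p) m.

Definition is_partition (L : list piece) : Prop :=
  (forall p, In p L -> forall m, piece_set p m -> (1 <= m)%Z) /\
  (forall m, (1 <= m)%Z -> exists p, In p L /\ piece_set p m) /\
  (forall k1 k2 d m, (k1 < length L)%nat -> (k2 < length L)%nat -> k1 <> k2 ->
     piece_set (nth k1 L d) m -> ~ piece_set (nth k2 L d) m).

Definition Rij_piecewise (pi : Z -> Z) (L : list piece) : Prop :=
  is_partition L /\
  (forall p, In p L -> forall n, piece_set p n -> pi n = piece_val p n).

Definition perm_N (pi : Z -> Z) : Prop :=
  (forall n, (1 <= n)%Z -> (1 <= pi n)%Z) /\
  (forall n m, (1 <= n)%Z -> (1 <= m)%Z -> pi n = pi m -> n = m) /\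
  (forall m, (1 <= m)%Z -> exists n, (1 <= n)%Z /\ pi n = m).

Definition is_Rij_perm (pi : Z -> Z) : Prop :=
  perm_N pi /\ exists L, Rij_piecewise pi L.

Definition piter (k : nat) (pi : Z -> Z) : Z -> Z := Nat.iter k pi.

Definition dec (P : Prop) : bool :=
  if excluded_middle_informative P then true else false.

(* sigma_perm as defined in the paper (value n outside the four sets: irrelevant,
   since the theorem shows the four sets partition N) *)
Definition sigma_perm (n : Z) : Z :=
  if dec (inR 1 0 n) then fl ((phi + 1) * IZR n - 2)
  else if dec (inR 3 1 n) then fl (phi * IZR n + 2)
  else if dec (inR 2 2 n) then fl ((phi - 1) * IZR n + 2)
  else if dec (inR 2 0 n) then fl ((phi - 1) * IZR n)
  else n.

Definition L1 : list piece :=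
  Piece 1 0 1 1 (-2) :: Piece 3 1 1 0 2 :: Piece 2 2 1 (-1) 2 :: Piece 2 0 1 (-1) 0 :: nil.
Definition L2 : list piece :=
  Piece 2 2 1 0 2 :: Piece 1 0 1 0 (-2) :: Piece 4 0 0 1 0 :: Piece 3 1 0 1 0
  :: Piece 3 2 (-1) 2 1 :: nil.
Definition L3 : list piece :=
  Piece 3 1 1 0 2 :: Piece 4 0 1 (-1) 0 :: Piece 3 2 0 1 0 :: Piece 2 2 0 1 0
  :: Piece 1 0 0 1 0 :: nil.
Definition L4 : list piece :=
  Piece 1 0 1 1 (-2) :: Piece 2 2 1 (-1) 2 :: Piece 3 2 1 (-1) 0 :: Piece 4 0 0 1 0
  :: Piece 3 1 0 1 0 :: nil.
Definition L5 : list piece :=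
  Piece 1 1 1 0 2 :: Piece 1 0 1 0 (-2) :: Piece 4 0 1 (-1) 0 :: Piece 3 2 (-1) 2 1 :: nil.

(* Main.v *)
Require Import Defs.
From Stdlib Require Import Reals ZArith List Lra Lia Znumtheory ClassicalEpsilon.
Open Scope R_scope.

Lemma fl_spec x : IZR (fl x) <= x < IZR (fl x) + 1.
Proof. unfold fl. destruct (archimed x) as [H1 H2]. rewrite minus_IZR. simpl. lra. Qed.

Lemma fl_unique x k : IZR k <= x < IZR k + 1 -> fl x = k.
Proof. intros [H1 H2]. unfold fl. rewrite <- (tech_up x (k+1)); [lia| rewrite plus_IZR; simpl; lra | rewrite plus_IZR; simpl; lra]. Qed.

Lemma sqrt5_bounds : 2.2360 < sqrt 5 < 2.2361.
Proof.
  split.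
  - rewrite <- (sqrt_square 2.2360) by lra. apply sqrt_lt_1; lra.
  - rewrite <- (sqrt_square 2.2361) by lra. apply sqrt_lt_1; lra.
Qed.

Lemma phi_bounds : 1.6180 < phi < 1.61805.
Proof. unfold phi. pose proof sqrt5_bounds. lra. Qed.

Lemma phi2 : phi * phi = phi + 1.
Proof. unfold phi. pose proof (sqrt_sqrt 5). assert (sqrt 5 * sqrt 5 = 5) by (apply sqrt_sqrt; lra). nra. Qed.

Lemma prime5 : prime 5.
Proof.
  apply prime_intro; [lia|]. intros n Hn. apply Zgcd_1_rel_prime.
  assert (Hc : (n = 1 \/ n = 2 \/ n = 3 \/ n = 4)%Z) by lia.
  destruct Hc as [H|[H|[H|H]]]; subst n; reflexivity.
Qed.

Lemma no_sqrt5 : forall (N : nat) (x y : Z), (Z.abs x <= Z.of_nat N)%Z -> (5 * x * x = y * y)%Z -> x = 0%Z.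
Proof.
  induction N as [|N IH]; intros x y Hb H.
  - lia.
  - assert (Hp : prime 5) by exact prime5.
    assert (Hy : (5 | y)%Z).
    { destruct (prime_mult 5 Hp y y) as [h|h]; auto. exists (x*x)%Z. lia. }
    destruct Hy as [y1 ->].
    assert (Hx : (5 | x)%Z).
    { destruct (prime_mult 5 Hp x x) as [h|h]; auto. exists (y1*y1)%Z. nia. }
    destruct Hx as [x1 ->].
    assert (x1 = 0%Z) as ->. { apply (IH x1 y1); nia. }
    lia.
Qed.

Lemma phi_irr a b : IZR a * phi = IZR b -> a = 0%Z.
Proof.
  intros H. unfold phi in H.
  assert (E : IZR a * sqrt 5 = IZR (2*b - a)) by (rewrite minus_IZR, mult_IZR; simpl; lra).
  assert (E2 : IZR (5 * a * a) = IZR ((2*b-a)*(2*b-a))).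
  { rewrite !mult_IZR, <- E. assert (sqrt 5 * sqrt 5 = 5) by (apply sqrt_sqrt; lra). simpl. nra. }
  apply eq_IZR in E2. apply (no_sqrt5 (Z.to_nat (Z.abs a)) a (2*b-a)); [rewrite Z2Nat.id by lia; lia| exact E2].
Qed.
Definition A (n : Z) : Z := fl (IZR n * phi).

Lemma A_frac n : (n <> 0)%Z -> 0 < IZR n * phi - IZR (A n) < 1.
Proof.
  intros Hn. unfold A. destruct (fl_spec (IZR n * phi)) as [H1 H2].
  split; [|lra]. destruct (Rle_lt_or_eq_dec _ _ H1) as [h|h]; [lra|].
  exfalso. apply Hn. apply (phi_irr n (fl (IZR n * phi))). auto.
Qed.

Lemma linfloor (a b c p q r P Q k n : Z) :
  (1 <= n)%Z -> P = (a*p+a*q+b*p)%Z -> Q = (a*p+b*q)%Z ->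
  IZR k <= (IZR a*phi+IZR b)*IZR r + IZR c <= IZR k + 1 ->
  IZR k <= IZR P - IZR p*(IZR a*phi+IZR b) + (IZR a*phi+IZR b)*IZR r + IZR c <= IZR k + 1 ->
  ((IZR a*phi+IZR b)*IZR r + IZR c < IZR k + 1 \/
   IZR P - IZR p*(IZR a*phi+IZR b) + (IZR a*phi+IZR b)*IZR r + IZR c < IZR k + 1) ->
  fl ((IZR a*phi+IZR b) * IZR (p*A n+q*n+r) + IZR c) = (P*A n+Q*n+k)%Z.
Proof.
  intros Hn HP HQ H0 H1 H2. apply fl_unique.
  pose proof (A_frac n ltac:(lia)) as Hx.
  set (x := IZR n * phi - IZR (A n)) in *.
  assert (HA : IZR (A n) = IZR n * phi - x) by (unfold x; ring).
  set (g0 := (IZR a*phi+IZR b)*IZR r + IZR c) in *.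
  set (g1 := IZR P - IZR p*(IZR a*phi+IZR b) + (IZR a*phi+IZR b)*IZR r + IZR c) in *.
  assert (E : (IZR a*phi+IZR b) * IZR (p*A n+q*n+r) + IZR c
              = IZR (P*A n+Q*n) + ((1-x)*g0 + x*g1)).
  { rewrite !plus_IZR, !mult_IZR. rewrite HP, HQ, !plus_IZR, !mult_IZR. unfold g0, g1.
    rewrite HP, !plus_IZR, !mult_IZR. rewrite HA.
    match goal with |- ?L = ?R => assert (D : L - R = IZR a * IZR p * IZR n * (phi*phi - phi - 1)) by ring end.
    rewrite phi2 in D. replace (phi + 1 - phi - 1) with 0 in D by ring. rewrite Rmult_0_r in D.
    apply Rminus_diag_uniq. exact D. }
  rewrite E, plus_IZR.
  clearbody g0 g1. destruct Hx as [Hx1 Hx2].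
  split.
  - assert (0 <= (1-x)*(g0 - IZR k)) by (apply Rmult_le_pos; lra).
    assert (0 <= x*(g1 - IZR k)) by (apply Rmult_le_pos; lra). nra.
  - destruct H2 as [h|h].
    + assert (0 < (1-x)*(IZR k + 1 - g0)) by (apply Rmult_lt_0_compat; lra).
      assert (0 <= x*(IZR k + 1 - g1)) by (apply Rmult_le_pos; lra). nra.
    + assert (0 <= (1-x)*(IZR k + 1 - g0)) by (apply Rmult_le_pos; lra).
      assert (0 < x*(IZR k + 1 - g1)) by (apply Rmult_lt_0_compat; lra). nra.
Qed.

Ltac side := pose proof phi_bounds; first [reflexivity | lia | lra | (left; lra) | (right; lra)].
Definition B (n : Z) : Z := (A n + n)%Z.

Lemma A_ge n : (1 <= n)%Z -> (n <= A n)%Z.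
Proof.
  intros Hn. unfold A. destruct (fl_spec (IZR n * phi)) as [H1 H2].
  pose proof phi_bounds. apply IZR_le in Hn.
  assert (IZR n - 1 < IZR (fl (IZR n * phi))) by nra.
  assert (Hlt : (n - 1 < fl (IZR n * phi))%Z) by (apply lt_IZR; rewrite minus_IZR; simpl; lra). lia.
Qed.

Lemma A_mono n m : (n < m)%Z -> (A n < A m)%Z.
Proof.
  intros H. unfold A. destruct (fl_spec (IZR n * phi)) as [H1 H2].
  destruct (fl_spec (IZR m * phi)) as [H3 H4]. pose proof phi_bounds.
  assert (Hm : IZR n + 1 <= IZR m) by (rewrite <- plus_IZR; apply IZR_le; lia).
  assert (IZR n * phi + 1 < IZR m * phi) by nra.
  apply lt_IZR. lra.
Qed.

Lemma A_inj n m : A n = A m -> n = m.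
Proof. intros H. destruct (Z.lt_total n m) as [h|[h|h]]; auto; apply A_mono in h; lia. Qed.

Lemma B_inj n m : B n = B m -> n = m.
Proof. unfold B. intros H. destruct (Z.lt_total n m) as [h|[h|h]]; auto; pose proof (A_mono _ _ h); lia. Qed.

Lemma AA x : (1 <= x)%Z -> A (A x) = (A x + x - 1)%Z.
Proof.
  intros Hx. pose proof phi_bounds.
  transitivity (fl ((IZR 1*phi+IZR 0) * IZR (1*A x+0*x+0) + IZR 0)).
  { unfold A at 1. f_equal. replace (1 * A x + 0 * x + 0)%Z with (A x) by ring. simpl. ring. }
  rewrite (linfloor 1 0 0 1 0 0 1 1 (-1)); try side.
Qed.

Lemma AB x : (1 <= x)%Z -> A (B x) = (2 * A x + x)%Z.
Proof.
  intros Hx. pose proof phi_bounds.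
  transitivity (fl ((IZR 1*phi+IZR 0) * IZR (1*A x+1*x+0) + IZR 0)).
  { unfold A at 1. unfold B. f_equal. replace (1 * A x + 1 * x + 0)%Z with (A x + x)%Z by ring. simpl. ring. }
  rewrite (linfloor 1 0 0 1 1 0 2 1 0); try side.
Qed.

Lemma AB_disj x y : (1 <= x)%Z -> (1 <= y)%Z -> A x <> B y.
Proof.
  intros hx hy H. unfold B, A in H.
  pose proof (A_frac x ltac:(lia)) as Fx. pose proof (A_frac y ltac:(lia)) as Fy.
  unfold A in Fx, Fy. pose proof phi_bounds. pose proof phi2 as Hp2.
  set (m := fl (IZR x * phi)) in *. set (u := fl (IZR y * phi)) in *.
  assert (Hm : IZR m = IZR u + IZR y) by (rewrite <- plus_IZR; f_equal; exact H).
  assert (E1 : IZR x * phi * (phi - 1) = IZR x) by (replace (IZR x * phi * (phi - 1)) with (IZR x * (phi*phi - phi)) by ring; rewrite Hp2; ring).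
  assert (E2 : IZR y * phi * phi * (2 - phi) = IZR y).
  { replace (IZR y * phi * phi * (2 - phi)) with (IZR y * (phi*phi*2 - phi*phi*phi)) by ring.
    replace (phi*phi*phi) with (phi*phi*phi) by ring.
    assert (H3c : phi*phi*phi = 2*phi+1) by (rewrite Rmult_assoc; replace (phi*(phi*phi)) with (phi*phi*phi) by ring; replace (phi*phi*phi) with ((phi*phi)*phi) by ring; rewrite Hp2; replace ((phi+1)*phi) with (phi*phi+phi) by ring; rewrite Hp2; ring).
    rewrite H3c, Hp2. ring. }
  assert (Hyphi : IZR y * phi * phi = IZR y * phi + IZR y) by (rewrite Rmult_assoc, Hp2; ring).
  assert (Ha1 : (IZR x * phi - IZR m) * (phi - 1) > 0) by (apply Rmult_lt_0_compat; lra).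
  assert (Ha2 : (IZR m + 1 - IZR x * phi) * (phi - 1) > 0) by (apply Rmult_lt_0_compat; lra).
  (* m < y phi^2 < m+1 since y phi^2 = u + y + frac *)
  assert (Hb0 : IZR m < IZR y * phi * phi < IZR m + 1) by lra.
  assert (Hb1 : (IZR y * phi * phi - IZR m) * (2 - phi) > 0) by (apply Rmult_lt_0_compat; lra).
  assert (Hb2 : (IZR m + 1 - IZR y * phi * phi) * (2 - phi) > 0) by (apply Rmult_lt_0_compat; lra).
  assert (H5 : IZR m < IZR x + IZR y < IZR m + 1).
  { split.
    - assert (IZR m * (phi - 1) < IZR x) by (rewrite <- E1; lra).
      assert (IZR m * (2 - phi) < IZR y) by (rewrite <- E2; lra). lra.
    - assert (IZR x < (IZR m + 1) * (phi - 1)) by (rewrite <- E1; lra).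
      assert (IZR y < (IZR m + 1) * (2 - phi)) by (rewrite <- E2; lra). lra. }
  rewrite <- plus_IZR in H5. destruct H5 as [h1 h2]. apply lt_IZR in h1.
  rewrite <- plus_IZR in h2. apply lt_IZR in h2. lia.
Qed.
Lemma AB_cover m : (1 <= m)%Z -> (exists k, (1 <= k)%Z /\ m = A k) \/ (exists k, (1 <= k)%Z /\ m = B k).
Proof.
  intros Hm. pose proof phi_bounds as Pb. pose proof phi2 as Hp2.
  set (n := fl (IZR (m+1) * (phi - 1))).
  destruct (fl_spec (IZR (m+1) * (phi - 1))) as [H1 H2]. fold n in H1, H2.
  rewrite plus_IZR in H1, H2. simpl in H1, H2.
  assert (Hm1 : 1 <= IZR m) by (apply IZR_le; lia).
  assert (Hn0 : (0 <= n)%Z) by (apply le_IZR; simpl; nra).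
  assert (Hrn : IZR n * phi <= IZR m + 1).
  { assert (IZR n * phi <= (IZR m + 1) * (phi - 1) * phi) by nra.
    replace ((IZR m + 1) * (phi - 1) * phi) with ((IZR m + 1) * (phi*phi - phi)) in H by ring.
    rewrite Hp2 in H. lra. }
  destruct (Rlt_le_dec (IZR m) (IZR n * phi)) as [h|h].
  - left. exists n.
    assert (Hn1 : (1 <= n)%Z).
    { destruct (Z.eq_dec n 0) as [e|e]; [|lia]. rewrite e in h. simpl in h. lra. }
    split; auto. symmetry. unfold A. apply fl_unique. split; [lra|].
    destruct (Rle_lt_or_eq_dec _ _ Hrn) as [h'|h']; [exact h'|].
    exfalso. assert (n = 0%Z) by (apply (phi_irr n (m+1)); rewrite plus_IZR; simpl; lra). lia.
  - right. exists (m - n)%Z.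
    assert (hs : IZR n * phi < IZR m).
    { destruct (Rle_lt_or_eq_dec _ _ h) as [h'|h']; [exact h'|].
      exfalso. assert (n = 0%Z) by (apply (phi_irr n m); lra). subst n. rewrite H in h'. simpl in h'. lra. }
    assert (K1 : IZR n < (IZR m - IZR n) * phi).
    { (* m phi > n phi^2 = n phi + n *)
      assert (IZR n * phi * phi < IZR m * phi) by nra.
      replace (IZR n * phi * phi) with (IZR n * (phi*phi)) in H by ring. rewrite Hp2 in H. lra. }
    assert (K2 : (IZR m - IZR n) * phi < IZR n + 1).
    {
      assert ((IZR m + 1) * (phi - 1) * phi < (IZR n + 1) * phi) by nra.
      replace ((IZR m + 1) * (phi - 1) * phi) with ((IZR m + 1) * (phi*phi - phi)) in H by ring.
      rewrite Hp2 in H. nra. }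
    assert (Hk : (1 <= m - n)%Z).
    { assert (IZR n >= 0) by (apply Rle_ge; apply IZR_le; lia).
      assert (0 < (IZR m - IZR n)) by nra.
      assert (Hlt: (0 < m - n)%Z) by (apply lt_IZR; rewrite minus_IZR; simpl; lra). lia. }
    split; auto. unfold B.
    assert (A (m - n) = n) by (unfold A; apply fl_unique; rewrite minus_IZR; lra). lia.
Qed.
Lemma A_pos n : (1 <= n)%Z -> (1 <= A n)%Z.
Proof. intros; pose proof (A_ge n H); lia. Qed.
Lemma B_pos n : (1 <= n)%Z -> (1 <= B n)%Z.
Proof. intros; unfold B; pose proof (A_ge n H); lia. Qed.

Definition cf (c : nat) (n : Z) : Z :=
  match c with
  | O => (1*A n + 1*n + 0)%Z
  | 1%nat => (3*A n + 2*n + (-2))%Z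
  | 2%nat => (2*A n + 1*n + (-2))%Z
  | 3%nat => (5*A n + 3*n + 0)%Z
  | _ => (3*A n + 2*n + (-1))%Z
  end.

Lemma cf_word c n : (1 <= n)%Z ->
  cf c n = match c with
           | O => B n
           | 1%nat => A (B (A n))
           | 2%nat => A (A (A n))
           | 3%nat => A (B (B n))
           | _ => A (A (B n))
           end.
Proof.
  intros Hn. pose proof (A_pos n Hn). pose proof (B_pos n Hn).
  destruct c as [|[|[|[|c]]]]; unfold cf.
  - unfold B; lia.
  - rewrite AB by lia. unfold B. rewrite AA by lia. lia.
  - rewrite AA by lia. rewrite AA by lia. lia.
  - rewrite AB by lia. unfold B at 2. rewrite AB by lia. unfold B. lia.
  - rewrite AA by (apply B_pos; lia). rewrite AB by lia. unfold B. lia.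
Qed.

Lemma cf_pos c n : (1 <= n)%Z -> (1 <= cf c n)%Z.
Proof. intros Hn. pose proof (A_ge n Hn). destruct c as [|[|[|[|c]]]]; unfold cf; lia. Qed.

Ltac pos := repeat (first [apply A_pos | apply B_pos]); assumption.

Ltac peel H :=
  repeat match type of H with
  | A _ = A _ => apply A_inj in H
  | B _ = B _ => apply B_inj in H
  | A ?x = B ?y => exfalso; apply (AB_disj x y); [pos|pos|exact H]
  | B ?x = A ?y => exfalso; apply (AB_disj y x); [pos|pos|symmetry; exact H]
  end.

Lemma cf_inj c c' n n' : (c < 5)%nat -> (c' < 5)%nat -> (1 <= n)%Z -> (1 <= n')%Z ->
  cf c n = cf c' n' -> c = c' /\ n = n'.
Proof.
  intros Hc Hc' Hn Hn' H. rewrite (cf_word c n Hn), (cf_word c' n' Hn') in H.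
  destruct c as [|[|[|[|[|c]]]]]; try lia; destruct c' as [|[|[|[|[|c']]]]]; try lia;
  peel H; auto.
Qed.

Definition memb (i : nat) (j : Z) (c : nat) : bool :=
  match i with
  | 1%nat => if Z.eqb j 0 then Nat.eqb c 0 else if Z.eqb j 1 then (Nat.eqb c 2 || Nat.eqb c 4)%bool else false
  | 2%nat => if Z.eqb j 0 then (Nat.eqb c 1 || Nat.eqb c 3)%bool else if Z.eqb j 2 then Nat.eqb c 2 else false
  | 3%nat => if Z.eqb j 1 then Nat.eqb c 4 else if Z.eqb j 2 then Nat.eqb c 1 else false
  | 4%nat => if Z.eqb j 0 then Nat.eqb c 3 else false
  | _ => false
  end.

Definition cls (i : nat) (j : Z) (m : Z) : Prop :=
  exists c n, (c < 5)%nat /\ (1 <= n)%Z /\ m = cf c n /\ memb i j c = true.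

Lemma inR_A i j m : inR i j m <-> exists n, (1 <= n)%Z /\ m = (fib (S i) * A n + fib i * n - j)%Z.
Proof. reflexivity. Qed.

Ltac fibs := replace (fib 1) with 1%Z in * by reflexivity; replace (fib 2) with 1%Z in * by reflexivity;
  replace (fib 3) with 2%Z in * by reflexivity; replace (fib 4) with 3%Z in * by reflexivity;
  replace (fib 5) with 5%Z in * by reflexivity.

Ltac single c0 :=
  let m := fresh "m" in
  intros m; rewrite inR_A; cbv [fib]; split;
  [ intros [n [Hn ->]]; exists c0, n; split; [lia| split; [lia| split; [unfold cf; ring| reflexivity]]]
  | intros [c [n [Hc [Hn [-> Hm]]]]]; exists n; split; [lia|];
    destruct c as [|[|[|[|[|c]]]]]; try lia; try discriminate Hm; unfold cf; ring ].

Lemma cls10 m : inR 1 0 m <-> cls 1 0 m. Proof. revert m. single 0%nat. Qed.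
Lemma cls31 m : inR 3 1 m <-> cls 3 1 m. Proof. revert m. single 4%nat. Qed.
Lemma cls22 m : inR 2 2 m <-> cls 2 2 m. Proof. revert m. single 2%nat. Qed.
Lemma cls40 m : inR 4 0 m <-> cls 4 0 m. Proof. revert m. single 3%nat. Qed.
Lemma cls32 m : inR 3 2 m <-> cls 3 2 m. Proof. revert m. single 1%nat. Qed.

Lemma cls20 m : inR 2 0 m <-> cls 2 0 m.
Proof.
  rewrite inR_A. cbv [fib]. split.
  - intros [n [Hn ->]]. destruct (AB_cover n Hn) as [[k [Hk ->]]|[k [Hk ->]]].
    + exists 1%nat, k. repeat split; try lia. unfold cf. rewrite AA by lia. ring.
    + exists 3%nat, k. repeat split; try lia. unfold cf. rewrite AB by lia. unfold B. ring.
  - intros [c [n [Hc [Hn [-> Hm]]]]].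
    destruct c as [|[|[|[|[|c]]]]]; try lia; try discriminate Hm.
    + exists (A n). split; [pos|]. unfold cf. rewrite AA by lia. ring.
    + exists (B n). split; [pos|]. unfold cf. rewrite AB by lia. unfold B. ring.
Qed.

Lemma cls11 m : inR 1 1 m <-> cls 1 1 m.
Proof.
  rewrite inR_A. cbv [fib]. split.
  - intros [n [Hn ->]]. destruct (AB_cover n Hn) as [[k [Hk ->]]|[k [Hk ->]]].
    + exists 2%nat, k. repeat split; try lia. unfold cf. rewrite AA by lia. ring.
    + exists 4%nat, k. repeat split; try lia. unfold cf. rewrite AB by lia. unfold B. ring.
  - intros [c [n [Hc [Hn [-> Hm]]]]].
    destruct c as [|[|[|[|[|c]]]]]; try lia; try discriminate Hm.
    + exists (A n). split; [pos|]. unfold cf. rewrite AA by lia. ring.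
    + exists (B n). split; [pos|]. unfold cf. rewrite AB by lia. unfold B. ring.
Qed.

Lemma classify m : (1 <= m)%Z -> exists c n, (c < 5)%nat /\ (1 <= n)%Z /\ m = cf c n.
Proof.
  intros Hm. destruct (AB_cover m Hm) as [[k [Hk ->]]|[k [Hk ->]]].
  - destruct (AB_cover k Hk) as [[j [Hj ->]]|[j [Hj ->]]].
    + assert (inR 1 1 (A (A j))) as H.
      { rewrite inR_A. exists j. split; auto. cbv [fib]. rewrite AA by lia. ring. }
      apply cls11 in H. destruct H as [c [n [Hc [Hn [E _]]]]]. eauto.
    + assert (inR 2 0 (A (B j))) as H.
      { rewrite inR_A. exists j. split; auto. cbv [fib]. rewrite AB by lia. ring. }
      apply cls20 in H. destruct H as [c [n [Hc [Hn [E _]]]]]. eauto.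
  - exists 0%nat, k. split; [lia| split; [lia| unfold cf, B; ring]].
Qed.
Lemma sigma_alt m : sigma_perm m =
  if dec (inR 1 0 m) then piece_val (Piece 1 0 1 1 (-2)) m
  else if dec (inR 3 1 m) then piece_val (Piece 3 1 1 0 2) m
  else if dec (inR 2 2 m) then piece_val (Piece 2 2 1 (-1) 2) m
  else if dec (inR 2 0 m) then piece_val (Piece 2 0 1 (-1) 0) m
  else m.
Proof.
  unfold sigma_perm, piece_val; cbn [p_a p_b p_c].
  destruct (dec (inR 1 0 m)); [f_equal; lra|].
  destruct (dec (inR 3 1 m)); [f_equal; lra|].
  destruct (dec (inR 2 2 m)); [f_equal; lra|].
  destruct (dec (inR 2 0 m)); [f_equal; lra|]. reflexivity.
Qed.
Definition good (i : nat) (j : Z) := forall m, inR i j m <-> cls i j m.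

Lemma good10 : good 1 0. Proof. exact cls10. Qed.
Lemma good31 : good 3 1. Proof. exact cls31. Qed.
Lemma good22 : good 2 2. Proof. exact cls22. Qed.
Lemma good40 : good 4 0. Proof. exact cls40. Qed.
Lemma good32 : good 3 2. Proof. exact cls32. Qed.
Lemma good20 : good 2 0. Proof. exact cls20. Qed.
Lemma good11 : good 1 1. Proof. exact cls11. Qed.

Ltac good_tac := first [exact good10 | exact good31 | exact good22 | exact good40
  | exact good32 | exact good20 | exact good11].

Lemma memR i j c n : good i j -> (c < 5)%nat -> (1 <= n)%Z ->
  (inR i j (cf c n) <-> memb i j c = true).
Proof.
  intros G Hc Hn. split; [intros HH; apply G in HH; revert HH | intros HH; apply G; revert HH].
  - intros [c' [n' [Hc' [Hn' [E M]]]]]. destruct (cf_inj c c' n n' Hc Hc' Hn Hn' E) as [-> _]. exact M.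
  - intros M. exists c, n. repeat split; auto.
Qed.

Lemma dec_memb i j c n : good i j -> (c < 5)%nat -> (1 <= n)%Z ->
  dec (inR i j (cf c n)) = memb i j c.
Proof.
  intros G Hc Hn. unfold dec. destruct (excluded_middle_informative _) as [h|h].
  - apply (memR i j c n G Hc Hn) in h. auto.
  - destruct (memb i j c) eqn:E; auto. exfalso. apply h. apply (memR i j c n G Hc Hn). auto.
Qed.

Definition g (c : nat) : nat :=
  match c with O => 1 | 1 => 2 | 2 => 0 | 3 => 4 | _ => 3 end%nat.

Ltac iter_eval := repeat match goal with |- context [Nat.iter ?k g ?c] =>
  let v := eval compute in (Nat.iter k g c) in change (Nat.iter k g c) with v end.

Ltac lf := unfold piece_val; cbn [p_a p_b p_c]; iter_eval; unfold cf; apply linfloor; side.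

Lemma sigma_cls c n : (c < 5)%nat -> (1 <= n)%Z -> sigma_perm (cf c n) = cf (g c) n.
Proof.
  intros Hc Hn. rewrite sigma_alt.
  rewrite (dec_memb 1 0 c n good10 Hc Hn), (dec_memb 3 1 c n good31 Hc Hn),
          (dec_memb 2 2 c n good22 Hc Hn), (dec_memb 2 0 c n good20 Hc Hn).
  destruct c as [|[|[|[|[|c]]]]]; try lia; cbv beta iota delta [memb Nat.eqb Z.eqb Pos.eqb orb g]; lf.
Qed.

Lemma iter_cls k c n : (c < 5)%nat -> (1 <= n)%Z -> piter k sigma_perm (cf c n) = cf (Nat.iter k g c) n.
Proof.
  intros Hc Hn. unfold piter. induction k as [|k IH]; [reflexivity|].
  simpl. rewrite IH. apply sigma_cls; auto.
  clear IH. induction k as [|k IH]; simpl; auto.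
  destruct (Nat.iter k g c) as [|[|[|[|[|x]]]]]; simpl; lia.
Qed.
Definition pmemb (p : piece) (c : nat) : bool := memb (p_i p) (p_j p) c.

Lemma partition_gen L :
  (forall p, In p L -> good (p_i p) (p_j p)) ->
  (forall c, (c < 5)%nat -> exists p, In p L /\ pmemb p c = true) ->
  (forall k1 k2 d c, (k1 < length L)%nat -> (k2 < length L)%nat -> k1 <> k2 -> (c < 5)%nat ->
     pmemb (nth k1 L d) c = true -> pmemb (nth k2 L d) c = false) ->
  is_partition L.
Proof.
  intros G C D. split; [|split].
  - intros p Hp m Hm. unfold piece_set in Hm. apply (G p Hp) in Hm.
    destruct Hm as [c [n [_ [Hn [-> _]]]]]. apply cf_pos; auto.
  - intros m Hm. destruct (classify m Hm) as [c [n [Hc [Hn ->]]]].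
    destruct (C c Hc) as [p [Hp M]]. exists p. split; auto. unfold piece_set.
    apply (G p Hp). exists c, n. repeat split; auto.
  - intros k1 k2 d m H1 H2 Hne M1 M2. unfold piece_set in M1, M2.
    apply (G _ (nth_In L d H1)) in M1. apply (G _ (nth_In L d H2)) in M2.
    destruct M1 as [c1 [n1 [Hc1 [Hn1 [E1 B1]]]]]. destruct M2 as [c2 [n2 [Hc2 [Hn2 [E2 B2]]]]].
    subst m. destruct (cf_inj _ _ _ _ Hc1 Hc2 Hn1 Hn2 E2) as [<- _].
    pose proof (D k1 k2 d c1 H1 H2 Hne Hc1 B1) as X. unfold pmemb in X. congruence.
Qed.

Lemma piecewise_gen f L : is_partition L -> (forall p, In p L -> good (p_i p) (p_j p)) ->
  (forall p, In p L -> forall c n, (c < 5)%nat -> (1 <= n)%Z -> pmemb p c = true ->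
     f (cf c n) = piece_val p (cf c n)) -> Rij_piecewise f L.
Proof.
  intros P G V. split; auto. intros p Hp m Hm. unfold piece_set in Hm. apply (G p Hp) in Hm.
  destruct Hm as [c [n [Hc [Hn [-> M]]]]]. apply V; auto.
Qed.

Lemma permN_gen f h :
  (forall c n, (c < 5)%nat -> (1 <= n)%Z -> f (cf c n) = cf (h c) n) ->
  (forall c, (c < 5)%nat -> (h c < 5)%nat) ->
  (forall c c', (c < 5)%nat -> (c' < 5)%nat -> h c = h c' -> c = c') ->
  (forall c, (c < 5)%nat -> exists c', (c' < 5)%nat /\ h c' = c) -> perm_N f.
Proof.
  intros F H1 H2 H3. split; [|split].
  - intros m Hm. destruct (classify m Hm) as [c [n [Hc [Hn ->]]]]. rewrite F; auto. apply cf_pos; auto.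
  - intros m m' Hm Hm' E. destruct (classify m Hm) as [c [n [Hc [Hn ->]]]].
    destruct (classify m' Hm') as [c' [n' [Hc' [Hn' ->]]]]. rewrite !F in E; auto.
    destruct (cf_inj _ _ _ _ (H1 c Hc) (H1 c' Hc') Hn Hn' E) as [e ->].
    rewrite (H2 c c' Hc Hc' e). reflexivity.
  - intros m Hm. destruct (classify m Hm) as [c [n [Hc [Hn ->]]]].
    destruct (H3 c Hc) as [c' [Hc' E]]. exists (cf c' n). split; [apply cf_pos; auto|].
    rewrite F, E; auto.
Qed.

Ltac fin5 := intros c Hc; destruct c as [|[|[|[|[|c]]]]]; try lia.

Lemma permN_iter k : perm_N (piter k sigma_perm) ->
  perm_N (piter k sigma_perm).
Proof. auto. Qed.

Ltac permN_k k :=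
  apply (permN_gen _ (Nat.iter k g)); 
  [ intros c n Hc Hn; apply iter_cls; auto
  | fin5; iter_eval; lia
  | intros c c' Hc Hc'; destruct c as [|[|[|[|[|c]]]]]; try lia; destruct c' as [|[|[|[|[|c']]]]]; try lia; iter_eval; lia
  | fin5; iter_eval;
    first [exists 0%nat; iter_eval; split; [lia|reflexivity] | exists 1%nat; iter_eval; split; [lia|reflexivity]
          | exists 2%nat; iter_eval; split; [lia|reflexivity] | exists 3%nat; iter_eval; split; [lia|reflexivity]
          | exists 4%nat; iter_eval; split; [lia|reflexivity]] ].

Ltac in_list_good := intros p Hp; simpl in Hp; repeat (destruct Hp as [<-|Hp]; [cbn [p_i p_j]; good_tac|]); contradiction.

Ltac cover_tac := fin5;
  simpl; first
  [ eexists; split; [left; reflexivity| reflexivity]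
  | eexists; split; [right; left; reflexivity| reflexivity]
  | eexists; split; [right; right; left; reflexivity| reflexivity]
  | eexists; split; [right; right; right; left; reflexivity| reflexivity]
  | eexists; split; [right; right; right; right; left; reflexivity| reflexivity] ].

Ltac disj_tac := intros k1 k2 d c H1 H2 Hne Hc; simpl in H1, H2;
  destruct k1 as [|[|[|[|[|k1]]]]]; try lia; destruct k2 as [|[|[|[|[|k2]]]]]; try lia;
  destruct c as [|[|[|[|[|c]]]]]; try lia; simpl; first [reflexivity | discriminate].

Ltac vals_tac := intros p Hp; simpl in Hp;
  repeat (destruct Hp as [<-|Hp]; [intros c n Hc Hn Hm; first [rewrite iter_cls by auto | rewrite sigma_cls by auto];
     destruct c as [|[|[|[|[|c]]]]]; try lia; try discriminate Hm; unfold g; symmetry; lf|]); contradiction.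

Lemma part_L1 : is_partition L1.
Proof. apply partition_gen; [in_list_good | cover_tac | disj_tac]. Qed.

Lemma part_L2 : is_partition L2.
Proof. apply partition_gen; [in_list_good | cover_tac | disj_tac]. Qed.
Lemma part_L3 : is_partition L3.
Proof. apply partition_gen; [in_list_good | cover_tac | disj_tac]. Qed.
Lemma part_L4 : is_partition L4.
Proof. apply partition_gen; [in_list_good | cover_tac | disj_tac]. Qed.
Lemma part_L5 : is_partition L5.
Proof. apply partition_gen; [in_list_good | cover_tac | disj_tac]. Qed.

Lemma pw1 : Rij_piecewise sigma_perm L1.
Proof. apply piecewise_gen; [exact part_L1 | in_list_good | vals_tac]. Qed.
Lemma pw2 : Rij_piecewise (piter 2 sigma_perm) L2.
Proof. apply piecewise_gen; [exact part_L2 | in_list_good | vals_tac]. Qed.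
Lemma pw3 : Rij_piecewise (piter 3 sigma_perm) L3.
Proof. apply piecewise_gen; [exact part_L3 | in_list_good | vals_tac]. Qed.
Lemma pw4 : Rij_piecewise (piter 4 sigma_perm) L4.
Proof. apply piecewise_gen; [exact part_L4 | in_list_good | vals_tac]. Qed.
Lemma pw5 : Rij_piecewise (piter 5 sigma_perm) L5.
Proof. apply piecewise_gen; [exact part_L5 | in_list_good | vals_tac]. Qed.

Lemma pn1 : perm_N (piter 1 sigma_perm). Proof. permN_k 1%nat. Qed.
Lemma pn2 : perm_N (piter 2 sigma_perm). Proof. permN_k 2%nat. Qed.
Lemma pn3 : perm_N (piter 3 sigma_perm). Proof. permN_k 3%nat. Qed.
Lemma pn4 : perm_N (piter 4 sigma_perm). Proof. permN_k 4%nat. Qed.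
Lemma pn5 : perm_N (piter 5 sigma_perm). Proof. permN_k 5%nat. Qed.
Lemma Aval n v : IZR v <= IZR n * phi < IZR v + 1 -> A n = v.
Proof. intros H. unfold A. apply fl_unique. exact H. Qed.
Lemma A1 : A 1 = 1%Z. Proof. apply Aval. pose proof phi_bounds. lra. Qed.
Lemma A2 : A 2 = 3%Z. Proof. apply Aval. pose proof phi_bounds. lra. Qed.
Lemma A3 : A 3 = 4%Z. Proof. apply Aval. pose proof phi_bounds. lra. Qed.
Lemma A4 : A 4 = 6%Z. Proof. apply Aval. pose proof phi_bounds. lra. Qed.

Lemma sv c n m m' : (c < 5)%nat -> (1 <= n)%Z -> cf c n = m -> cf (g c) n = m' -> sigma_perm m = m'.
Proof. intros Hc Hn <- <-. apply sigma_cls; auto. Qed.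

Ltac svt c n m m' := rewrite (sv c n m m' ltac:(lia) ltac:(lia) ltac:(unfold cf; rewrite ?A1, ?A2, ?A3, ?A4; reflexivity)
   ltac:(unfold g, cf; rewrite ?A1, ?A2, ?A3, ?A4; reflexivity)).

Theorem theorem4p4 :
  Rij_piecewise sigma_perm L1 /\
  is_Rij_perm sigma_perm /\
  (* order 6 *)
  (forall n, (1 <= n)%Z -> piter 6 sigma_perm n = n) /\
  (forall k, (1 <= k <= 5)%nat -> exists n, (1 <= n)%Z /\ piter k sigma_perm n <> n) /\
  (* first values *)
  map sigma_perm (1 :: 2 :: 3 :: 4 :: 5 :: 6 :: 7 :: 8 :: 9 :: 10 :: nil)%Z
    = (2 :: 3 :: 1 :: 8 :: 11 :: 5 :: 16 :: 4 :: 7 :: 24 :: nil)%Z /\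
  (* powers *)
  (is_Rij_perm (piter 2 sigma_perm) /\ Rij_piecewise (piter 2 sigma_perm) L2) /\
  (is_Rij_perm (piter 3 sigma_perm) /\ Rij_piecewise (piter 3 sigma_perm) L3) /\
  (is_Rij_perm (piter 4 sigma_perm) /\ Rij_piecewise (piter 4 sigma_perm) L4) /\
  (is_Rij_perm (piter 5 sigma_perm) /\ Rij_piecewise (piter 5 sigma_perm) L5) /\
  (* sigma_perm^5 = sigma_perm^{-1} *)
  (forall n, (1 <= n)%Z -> piter 5 sigma_perm (sigma_perm n) = n /\ sigma_perm (piter 5 sigma_perm n) = n).
Proof.
  split; [exact pw1|].
  split; [split; [exact pn1 | exists L1; exact pw1]|].
  split.
  { intros m Hm. destruct (classify m Hm) as [c [n [Hc [Hn ->]]]].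
    rewrite iter_cls by auto. destruct c as [|[|[|[|[|c]]]]]; try lia; reflexivity. }
  split.
  { intros k Hk. destruct k as [|[|[|[|[|[|k]]]]]]; try lia;
    first [ exists (cf 4 1); split; [apply cf_pos; lia|]; rewrite iter_cls by lia; iter_eval;
            intro E; apply cf_inj in E; [destruct E; discriminate|lia|lia|lia|lia]; fail
          | exists (cf 2 1); split; [apply cf_pos; lia|]; rewrite iter_cls by lia; iter_eval;
            intro E; apply cf_inj in E; [destruct E; discriminate|lia|lia|lia|lia] ]. }
  split.
  { cbn [map]. svt 2%nat 1%Z 1%Z 2%Z. svt 0%nat 1%Z 2%Z 3%Z. svt 1%nat 1%Z 3%Z 1%Z. svt 4%nat 1%Z 4%Z 8%Z. svt 0%nat 2%Z 5%Z 11%Z.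
    svt 2%nat 2%Z 6%Z 5%Z. svt 0%nat 3%Z 7%Z 16%Z. svt 3%nat 1%Z 8%Z 4%Z. svt 2%nat 3%Z 9%Z 7%Z. svt 0%nat 4%Z 10%Z 24%Z. reflexivity. }
  split; [split; [split; [exact pn2 | exists L2; exact pw2] | exact pw2]|].
  split; [split; [split; [exact pn3 | exists L3; exact pw3] | exact pw3]|].
  split; [split; [split; [exact pn4 | exists L4; exact pw4] | exact pw4]|].
  split; [split; [split; [exact pn5 | exists L5; exact pw5] | exact pw5]|].
  intros m Hm. destruct (classify m Hm) as [c [n [Hc [Hn ->]]]].
  destruct c as [|[|[|[|[|c]]]]]; try lia; split;
  first [ rewrite sigma_cls by auto; unfold g; rewrite iter_cls by lia; reflexivity
        | rewrite iter_cls by lia; iter_eval; rewrite sigma_cls by lia; reflexivity ].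
Qed.
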